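(* Let $\mathfrak{g}$ be a finite-dimensional complex Lie algebra having property $F$. Then $\mathfrak{g}$ does not admit a periodic prederivation.
   Context: A Lie algebra $\mathfrak{g}$ has property $F$ if every basis of $\mathfrak{g}$ contains three distinct elements $x_1,x_2,x_3$ such that for all $i\neq j$ in $\{1,2,3\}$ one has $[x_i,[x_i,x_j]]\neq 0$ or $[x_j,[x_j,x_i]]\neq 0$. A linear map $P:\mathfrak{g}\to\mathfrak{g}$ is a prederivation if $P([x,[y,z]])=[P(x),[y,z]]+[x,[P(y),z]]+[x,[y,P(z)]]$ for all $x,y,z\in\mathfrak{g}$; it is periodic if $P^m=\mathrm{id}$ for some integer $m\ge 1$. *)

(* Defs.v *)
From HB Require Import structures.
From mathcomp Require Import all_boot all_order all_algebra.
From mathcomp Require Import reals.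
From mathcomp.real_closed Require Import complex.
Set Implicit Arguments. Unset Strict Implicit. Unset Printing Implicit Defensive.
Import Order.TTheory GRing.Theory Num.Theory.
Local Open Scope ring_scope.

Definition is_lie_bracket (K : fieldType) (V : vectType K) (br : V -> V -> V) : Prop :=
  [/\ (forall (a : K) (x y z : V), br (a *: x + y) z = a *: br x z + br y z),
      (forall (a : K) (x y z : V), br z (a *: x + y) = a *: br z x + br z y),
      (forall x : V, br x x = 0) &
      (forall x y z : V, br x (br y z) + br y (br z x) + br z (br x y) = 0)].

Definition cond_F (K : fieldType) (V : vectType K) (br : V -> V -> V) (x y : V) : Prop :=
  br x (br x y) != 0 \/ br y (br y x) != 0.

Definition property_F (K : fieldType) (V : vectType K) (br : V -> V -> V) : Prop :=
  forall X : seq V, basis_of fullv X ->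
    exists x1 x2 x3 : V,
      [/\ x1 \in X, x2 \in X & x3 \in X] /\
      [/\ x1 != x2, x1 != x3 & x2 != x3] /\
      [/\ cond_F br x1 x2, cond_F br x1 x3 & cond_F br x2 x3].

Definition prederivation (K : fieldType) (V : vectType K) (br : V -> V -> V)
  (P : 'End(V)) : Prop :=
  forall x y z : V,
    P (br x (br y z)) = br (P x) (br y z) + br x (br (P y) z) + br x (br y (P z)).

Definition periodic (K : fieldType) (V : vectType K) (P : 'End(V)) : Prop :=
  exists m : nat, (1 <= m)%N /\ forall v : V, iter m P v = v.

(* Main.v *)
Require Import Defs.
From HB Require Import structures.
From mathcomp Require Import all_boot all_order all_algebra cyclic.
From mathcomp Require Import separable cyclotomic.
From mathcomp Require Import reals.
From mathcomp.real_closed Require Import complex.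
From mathcomp Require Import ring.
Set Implicit Arguments. Unset Strict Implicit. Unset Printing Implicit Defensive.
Import Order.TTheory GRing.Theory Num.Theory.
Local Open Scope ring_scope.
Lemma extract_basis (K : fieldType) (V : vectType K) (X : seq V) :
  exists Y : seq V, {subset Y <= X} /\ (<<Y>> = <<X>>)%VS /\ free Y.
Proof.
elim: X => [|x X [Y [sYX [eY fY]]]]; first by exists [::]; split; [move=> y|split; [|exact: nil_free]].
have [xY|xnY] := boolP (x \in <<Y>>)%VS.
  exists Y; split; first by move=> y /sYX; rewrite inE orbC => ->.
  rewrite span_cons -eY; split=> //; symmetry; apply/addv_idPr.
  by rewrite -memvE.
exists (x :: Y); split; first by move=> y; rewrite !inE => /orP[->|/sYX ->] //; rewrite orbT.
by rewrite !span_cons eY free_cons xnY fY.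
Qed.

Section Eig.
Variables (K : fieldType) (V : vectType K) (P : 'End(V)) (n : nat) (z : K).
Hypothesis zprim : n.+1.-primitive_root z.
Hypothesis Pper : forall v, iter n.+1 P v = v.

Definition E (k : nat) (v : V) : V := \sum_(j < n.+1) ((z ^+ j) ^+ k) *: iter j P v.

Lemma E_eig k v : z ^+ k *: P (E k v) = E k v.
Proof.
rewrite /E linear_sum scaler_sumr /=.
under eq_bigr => j _ do rewrite linearZ /= scalerA -iterS -exprMn -exprS.
rewrite big_ord_recr /= big_ord_recl /= -[P (iter n P v)]iterS Pper.
rewrite (prim_expr_order zprim) expr0 !expr1n addrC; by congr (_ + _).
Qed.

Lemma E_sum v : \sum_(k < n.+1) E k v = n.+1%:R *: v.
Proof.
rewrite /E exchange_big /=.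
under eq_bigr => j _ do rewrite -scaler_suml.
rewrite big_ord_recl /= [X in _ + X]big1.
  under eq_bigr => k _ do rewrite expr0 expr1n.
  by rewrite sumr_const card_ord addr0 /= -[n.+1%:R]/(1 *+ n.+1) scaler_nat.
move=> i _.
have hz : z ^+ (bump 0 i) != 1.
  rewrite -(expr0 z) (eq_prim_root_expr zprim).
  by rewrite /bump /= add1n modn_small // ?ltnS ?ltn_ord // mod0n.
suff -> : \sum_(k < n.+1) (z ^+ bump 0 i) ^+ k = 0 by rewrite scale0r.
have := subrX1 (z ^+ bump 0 i) n.+1.
rewrite -exprM mulnC exprM (prim_expr_order zprim) expr1n subrr => /esym/eqP.
by rewrite mulf_eq0 subr_eq0 (negbTE hz) => /eqP.
Qed.
End Eig.
Lemma prim_exists (F : closedFieldType) n : n%:R != 0 :> F -> (0 < n)%N ->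
  exists z : F, n.-primitive_root z.
Proof.
move=> nz n_gt0.
pose p : {poly F} := 'X^n - 1; have [r Dp] := closed_field_poly_normal p.
rewrite (monicP _) ?monicXnsubC // scale1r in Dp.
have rn1: all n.-unity_root r by apply/allP=> z; rewrite -root_prod_XsubC -Dp.
have sz_r: (n < (size r).+1)%N.
  by rewrite -(size_prod_XsubC r id) -Dp size_XnsubC.
have [|z] := hasP (has_prim_root n_gt0 rn1 _ sz_r); last by exists z.
by rewrite -separable_prod_XsubC -Dp separable_Xn_sub_1.
Qed.

Lemma unit_norm (C : numClosedFieldType) (a : C) m : (0 < m)%N -> a ^+ m = 1 -> `|a| = 1.
Proof.
move=> m0 am.
have : `|a| ^+ m == 1 by rewrite -normrX am normr1.
rewrite pexpr_eq1 ?normr_ge0 //.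
by move/eqP.
Qed.

Lemma key_norm (C : numClosedFieldType) (a b : C) :
  `|a| = 1 -> `|b| = 1 -> `|2 * a + b| = 1 -> b = - a.
Proof.
move=> na nb nc.
have ha : a * a^* = 1 by rewrite -normCK na expr1n.
have hb : b * b^* = 1 by rewrite -normCK nb expr1n.
have hc : (2 * a + b) * (2 * a^* + b^*) = 1.
  by have := normCK (2 * a + b); rewrite nc expr1n rmorphD rmorphM /= (conjC_nat _ 2).
have e : 2 * ((a + b) * (a^* + b^*)) = (2 * a + b) * (2 * a^* + b^*) - 2 * (a * a^*) + b * b^*.
  ring.
rewrite hc ha hb -rmorphD -normCK in e.
have : 2 * `|a + b| ^+ 2 == 0 by rewrite e; apply/eqP; ring.
rewrite mulf_eq0 pnatr_eq0 /= expf_eq0 /= normr_eq0 addr_eq0 => /eqP.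
by move=> ->; rewrite opprK.
Qed.
Lemma eigenbasis (K : fieldType) (V : vectType K) (P : 'End(V)) (n : nat) (z : K) :
  n.+1.-primitive_root z -> n.+1%:R != 0 :> K -> (forall v, iter n.+1 P v = v) ->
  exists X : seq V, basis_of fullv X /\ forall x, x \in X -> exists c, P x = c *: x.
Proof.
move=> zprim nz Pper.
pose X0 := [seq E P n z k v | k <- iota 0 n.+1, v <- vbasis fullv].
have [Y [sYX [eY fY]]] := extract_basis X0.
exists Y; split.
  rewrite /basis_of fY andbT eY eqEsubv subvf /=.
  rewrite -(span_basis (vbasisP fullv)); apply/span_subvP => v vb.
  have -> : v = (n.+1%:R)^-1 *: \sum_(k < n.+1) E P n z k v.
    by rewrite E_sum // scalerA mulVf // scale1r.
  apply: rpredZ; apply: rpred_sum => k _; apply: memv_span.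
  by apply/allpairsP; exists (val k, v); rewrite mem_iota /= ltn_ord vb.
move=> y /sYX /allpairsP [[k v] [_ _ ->]] /=.
have z0 : z ^+ k != 0 by rewrite expf_neq0 // (prim_root_eq0 zprim).
exists (z ^+ k)^-1; rewrite -{2}(E_eig zprim Pper k v) scalerA mulVf //.
by rewrite scale1r.
Qed.

Lemma eig_root (K : fieldType) (V : vectType K) (P : 'End(V)) (m : nat) (w : V) (c : K) :
  w != 0 -> P w = c *: w -> iter m P w = w -> c ^+ m = 1.
Proof.
move=> w0 Pw Pm.
have it : forall j, iter j P w = c ^+ j *: w.
  elim=> [|j IH]; first by rewrite expr0 scale1r.
  by rewrite iterS IH linearZ /= Pw scalerA exprSr.
move: Pm; rewrite it => /eqP; rewrite -subr_eq0 -{2}(scale1r w) -scalerBl.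
by rewrite scaler_eq0 (negbTE w0) orbF subr_eq0 => /eqP.
Qed.

Section Lie.
Variables (K : fieldType) (V : vectType K) (br : V -> V -> V).
Hypothesis hbr : is_lie_bracket br.

Lemma brZl a x y : br (a *: x) y = a *: br x y.
Proof.
case: hbr => hl _ _ _.
have h0 : br 0 y = 0.
  have := hl 1 0 0 y; rewrite !scale1r addr0 => h.
  by apply: (@addrI _ (br 0 y)); rewrite addr0 -h.
by have := hl a x 0 y; rewrite addr0 h0 addr0.
Qed.

Lemma brZr a x y : br y (a *: x) = a *: br y x.
Proof.
case: hbr => _ hr _ _.
have h0 : br y 0 = 0.
  have := hr 1 0 0 y; rewrite !scale1r addr0 => h.
  by apply: (@addrI _ (br y 0)); rewrite addr0 -h.
by have := hr a x 0 y; rewrite addr0 h0 addr0.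
Qed.

Lemma br_eig (P : 'End(V)) x y a b :
  prederivation br P -> P x = a *: x -> P y = b *: y ->
  P (br x (br x y)) = (a + a + b) *: br x (br x y).
Proof.
move=> hP Px Py; rewrite hP Px Py !brZl !brZr ?brZl.
by rewrite !scalerDl.
Qed.
End Lie.

Theorem proposition5p19 (R : realType) (g : vectType R[i]) (br : g -> g -> g) :
  is_lie_bracket br -> property_F br ->
  ~ (exists P : 'End(g), prederivation br P /\ periodic P).
Proof.
move=> hbr hF [P [hP [m [m1 Pm]]]].
have [n em] : exists n, m = n.+1 by exists m.-1; rewrite prednK.
subst m.
have nz : n.+1%:R != 0 :> R[i] by rewrite pnatr_eq0.
have [z zprim] := prim_exists nz (ltn0Sn n).
have [X [bX eX]] := eigenbasis zprim nz Pm.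
have [x1 [x2 [x3 [[h1 h2 h3] [[_ _ _] [c12 c13 c23]]]]]] := hF X bX.
have ev : forall x, x \in X -> exists a : R[i], P x = a *: x /\ `|a| = 1.
  move=> x xX; have [a Pa] := eX x xX; exists a; split=> //.
  apply: (@unit_norm _ _ n.+1) => //.
  exact: (eig_root (basis_not0 bX xX) Pa (Pm x)).
have pair : forall x y a b, P x = a *: x -> P y = b *: y -> `|a| = 1 -> `|b| = 1 ->
    cond_F br x y -> b = - a.
  move=> x y a b Px Py na nb [H|H].
    apply: key_norm => //; apply: (@unit_norm _ _ n.+1) => //.
    have -> : 2 * a + b = a + a + b by rewrite mulr_natl mulr2n.
    exact: (eig_root H (br_eig hbr hP Px Py) (Pm _)).
  suff -> : a = - b by rewrite opprK.
  apply: key_norm => //; apply: (@unit_norm _ _ n.+1) => //.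
  have -> : 2 * b + a = b + b + a by rewrite mulr_natl mulr2n.
  exact: (eig_root H (br_eig hbr hP Py Px) (Pm _)).
have [a1 [P1 n1]] := ev _ h1.
have [a2 [P2 n2]] := ev _ h2.
have [a3 [P3 n3]] := ev _ h3.
have e12 := pair _ _ _ _ P1 P2 n1 n2 c12.
have e13 := pair _ _ _ _ P1 P3 n1 n3 c13.
have e23 := pair _ _ _ _ P2 P3 n2 n3 c23.
have : a1 + a1 == 0.
  by rewrite -{2}(opprK a1) -e12 -e23 e13 subrr.
rewrite -mulr2n -mulr_natl mulf_eq0 pnatr_eq0 /= -normr_eq0 n1 => /eqP.
by move=> /eqP; rewrite oner_eq0.
Qed.
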